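(* For a positive integer $r$ and complex numbers $e_1,\ldots,e_r$, define the rational function $\Phi_{e_1,\ldots,e_r}(x)$ recursively by $\Phi_{e_1}(x)=\frac{1}{e_1-x}$ and $\Phi_{e_1,\ldots,e_r}(x)=\frac{1}{e_r-\Phi_{e_1,\ldots,e_{r-1}}(x)}$ for $r\ge 2$, i.e. $$\Phi_{e_1,\ldots,e_r}(x)=\cfrac{1}{e_r-\cfrac{1}{e_{r-1}-\cfrac{1}{\cdots-\cfrac{1}{e_{2}-\cfrac{1}{e_1-x}}}}}.$$ Let $r$ be a positive integer and let $e_1,\ldots,e_r$ be integers. Suppose that for every permutation $s$ of $\{1,\ldots,r\}$ one has $\Phi_{e_{s(1)},\ldots,e_{s(r)}}(x)=x$ as rational functions. Then $e_1=\cdots=e_r$, and $e_1\in\{-1,0,1\}$. *)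

(* Defs.v *)
From mathcomp Require Import all_boot all_order all_algebra all_field.
Set Implicit Arguments. Unset Strict Implicit. Unset Printing Implicit Defensive.
Import GRing.Theory Num.Theory.
Local Open Scope ring_scope.

Definition ratfun := {fraction {poly algC}}.

Definition ratX : ratfun := tofrac ('X : {poly algC}).

Definition ratcst (e : int) : ratfun := tofrac (e%:~R : {poly algC}).

Definition Phi (es : seq int) : ratfun :=
  foldl (fun acc e => (ratcst e - acc)^-1) ratX es.

(* Main.v *)
Require Import Defs.
From mathcomp Require Import all_boot all_order all_algebra all_fingroup all_field.
From mathcomp Require Import zify ring lra.
Import GRing.Theory Num.Theory.
Local Open Scope ring_scope.

Definition st := (int * int * int * int)%type.
Definition step (m : st) (x : int) : st :=
  let '(a, b, c, d) := m in (c, d, x * c - a, x * d - b).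
Definition mat (es : seq int) : st := foldl step (1, 0, 0, 1) es.

Lemma mat_rcons es x : mat (rcons es x) = step (mat es) x.
Proof. by rewrite /mat foldl_rcons. Qed.

Lemma Phi_rcons es x : Phi (rcons es x) = (ratcst x - Phi es)^-1.
Proof. by rewrite /Phi foldl_rcons. Qed.

Definition lin (c d : int) : {poly algC} := (c%:~R)%:P * 'X + (d%:~R)%:P.

Lemma tofrac_int (c : int) : tofrac ((c%:~R : algC)%:P) = c%:~R :> ratfun.
Proof.
by rewrite (rmorph_int (@polyC algC)) (rmorph_int (@tofrac _)).
Qed.

Lemma tofrac_lin c d : tofrac (lin c d) = c%:~R * ratX + d%:~R.
Proof. by rewrite /lin tofracD tofracM !tofrac_int. Qed.

Lemma ratcstE e : ratcst e = e%:~R.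
Proof. by rewrite /ratcst (rmorph_int (@tofrac _)). Qed.

Lemma lin_coef c d : (lin c d)`_0 = d%:~R /\ (lin c d)`_1 = c%:~R.
Proof. by rewrite /lin !coefE /=; split; rewrite ?mulr0 ?add0r ?mulr1 ?addr0. Qed.

Lemma lin_neq0 c d : (c != 0) || (d != 0) -> c%:~R * ratX + d%:~R != 0 :> ratfun.
Proof.
move=> h; rewrite -tofrac_lin tofrac_eq0; apply: contraTneq h => h0.
have [h1 h2] := lin_coef c d; rewrite h0 !coefE in h1 h2.
by move/esym/eqP: h1; move/esym/eqP: h2; rewrite !intr_eq0 => -> ->.
Qed.

Lemma mat_det es : let '(a, b, c, d) := mat es in a * d - b * c = 1.
Proof.
elim/last_ind: es => [|es x IH] /=; first by [].
rewrite mat_rcons; move: IH; case: (mat es) => [[[a b] c] d] /= IH.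
by rewrite -IH; ring.
Qed.

Lemma field_step (F : fieldType) (t x a b c d : F) :
  (x * c - a) * t + (x * d - b) != 0 -> c * t + d != 0 ->
  (x - (a * t + b) / (c * t + d))^-1 = (c * t + d) / ((x * c - a) * t + (x * d - b)).
Proof.
move=> hN hD.
have -> : x - (a * t + b) / (c * t + d) = ((x * c - a) * t + (x * d - b)) / (c * t + d).
  apply: (mulIf hD); rewrite mulrBl divfK // mulfVK //; ring.
by rewrite invf_div.
Qed.

Lemma Phi_mat es : let '(a, b, c, d) := mat es in
  Phi es = (a%:~R * ratX + b%:~R) / (c%:~R * ratX + d%:~R) /\
  (c%:~R * ratX + d%:~R) != 0 :> ratfun.
Proof.
elim/last_ind: es => [|es x IH] /=.
  have E0 : (0:int)%:~R = 0 :> ratfun by rewrite mulr0z.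
  have E1 : (1:int)%:~R = 1 :> ratfun by rewrite mulr1z.
  rewrite E0 E1 mul0r add0r mul1r addr0 divr1; split; [by [] | exact: oner_neq0].
have := mat_det es.
rewrite mat_rcons Phi_rcons; move: IH; case: (mat es) => [[[a b] c] d] /= [-> hD] hdet.
have hN : ((x * c - a)%:~R * ratX + (x * d - b)%:~R) != 0 :> ratfun.
  apply: lin_neq0; rewrite -negb_and; apply/negP => /andP [/eqP h1 /eqP h2].
  have : c * (x * d - b) - d * (x * c - a) = 1 by rewrite -hdet; ring.
  by rewrite h1 h2 !mulr0 subr0 => /eqP; rewrite eq_sym oner_eq0.
split => //.
rewrite ratcstE.
move: hN hD; rewrite !intrB !intrM.
move: (ratX) (x%:~R : ratfun) (a%:~R : ratfun) (b%:~R : ratfun) (c%:~R : ratfun) (d%:~R : ratfun).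
exact: field_step.
Qed.

Lemma lin_coef2 c d : (lin c d)`_2 = 0.
Proof. by rewrite /lin !coefE /= mulr0 addr0. Qed.

Lemma key es : Phi es = ratX ->
  let '(a, b, c, d) := mat es in b = 0 /\ c = 0 /\ a = d.
Proof.
have := Phi_mat es; case: (mat es) => [[[a b] c] d] [-> hD] h.
have : tofrac (lin a b) = tofrac ('X * lin c d).
  rewrite tofracM !tofrac_lin; rewrite -[X in _ = X * _]h divfK //.
move/eqP; rewrite tofrac_eq => /eqP hp.
have h0 := congr1 (fun p : {poly algC} => p`_0) hp.
have h1 := congr1 (fun p : {poly algC} => p`_1) hp.
have h2 := congr1 (fun p : {poly algC} => p`_2) hp.
move: h0 h1 h2 => /=; rewrite !coefXM /= lin_coef2.
have [-> ->] := lin_coef a b; have [-> ->] := lin_coef c d.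
by move=> /eqP; rewrite intr_eq0 => /eqP -> /eqP; rewrite eqr_int => /eqP -> /esym/eqP; rewrite intr_eq0 => /eqP ->.
Qed.

Lemma swap rest (x y : int) : Phi (rest ++ [:: x; y]) = ratX ->
  Phi (rest ++ [:: y; x]) = ratX -> x = y.
Proof.
have E : forall u v, rest ++ [:: u; v] = rcons (rcons rest u) v.
  by move=> u v; rewrite -!cats1 -catA.
move=> /key + /key; rewrite !E !mat_rcons; have := mat_det rest.
case: (mat rest) => [[[a b] c] d] /= hdet [h1 [h2 h3]] [h4 [h5 h6]].
have hb : b = x * d by lia.
have hb' : b = y * d by lia.
have ha : a = x * c + d.
  move: h3; rewrite -hb subrr mulr0 sub0r; lia.
have hd : d * d = 1 by rewrite -hdet ha hb; ring.
have : (x - y) * d = 0 by rewrite mulrBl -hb -hb' subrr.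
move/eqP; rewrite mulf_eq0 subr_eq0 => /orP [/eqP //|/eqP d0].
by move: hd; rewrite d0 mulr0 => /eqP; rewrite eq_sym oner_eq0.
Qed.

Fixpoint u (e : int) (k : nat) : int :=
  match k with
  | 0 => 0
  | 1 => 1
  | (k'.+1 as k1).+1 => e * u e k1 - u e k'
  end.

Lemma nseqS_rcons (T : Type) n (x : T) : nseq n.+1 x = rcons (nseq n x) x.
Proof. by elim: n => //= n ->. Qed.

Lemma uSS e k : u e k.+2 = e * u e k.+1 - u e k.
Proof. by []. Qed.

Lemma mat_nseq e n : mat (nseq n.+1 e) = (- u e n, u e n.+1, - u e n.+1, u e n.+2).
Proof.
elim: n => [|n IH]; first by rewrite /mat /= ?mulr0 ?mulr1 ?subr0 ?sub0r ?mul0r ?sub0r ?mul1r.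
rewrite nseqS_rcons mat_rcons IH /step (uSS e n.+1) (uSS e n).
by congr (_, _, _, _); ring.
Qed.

Lemma u_pos e k : 2 <= e -> 0 <= u e k < u e k.+1.
Proof.
move=> he; elim: k => [|k IH] //=.
case: k IH => [|k] /= IH; first by lia.
nia.
Qed.

Lemma u_neg e k : u (- e) k = (-1) ^+ k.+1 * u e k.
Proof.
elim/ltn_ind: k => -[|[|k]] IH.
- by rewrite /= mulr0.
- by rewrite /= expr2 mulN1r opprK mulr1.
rewrite !uSS !IH //; rewrite !exprS; ring.
Qed.

Lemma u_ne0 e k : (2 <= e) || (e <= -2) -> u e k.+1 != 0.
Proof.
case/orP => he.
  by have := @u_pos _ k he; lia.
have he' : 2 <= - e by lia.
suff : u (- e) k.+1 != 0 by rewrite u_neg mulf_eq0 signr_eq0.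
have := @u_pos _ k he'; lia.
Qed.

Lemma small e n : Phi (nseq n.+1 e) = ratX -> e = -1 \/ e = 0 \/ e = 1.
Proof.
move/key; rewrite mat_nseq => -[_ [h _]].
have : u e n.+1 == 0 by rewrite -oppr_eq0 h.
case: (boolP ((2 <= e) || (e <= -2))) => [hh|]; first by rewrite (negPf (@u_ne0 e n hh)).
lia.
Qed.

Lemma exists_perm (T : finType) (a b i j : T) : a != b -> i != j ->
  exists s : {perm T}, s a = i /\ s b = j.
Proof.
move=> hab hij.
set b' := tperm a i b.
have hb' : b' != i.
  by rewrite /b' -{2}(tpermL a i) (inj_eq (@perm_inj _ _)) eq_sym.
exists (tperm a i * tperm b' j)%g; rewrite !permM tpermL tpermD //.
  by rewrite -/b' tpermL.
by rewrite eq_sym.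
Qed.

Lemma split_map n (f : 'I_n.+2 -> int) :
  [seq f k | k <- enum 'I_n.+2] =
  take n [seq f k | k <- enum 'I_n.+2] ++ [:: f (inord n); f (inord n.+1)].
Proof.
set l := [seq f k | k <- enum 'I_n.+2].
have hs : size l = n.+2 by rewrite size_map size_enum_ord.
have hn : forall m, (m < n.+2)%N -> nth 0 l m = f (inord m).
  move=> m hm; rewrite (nth_map ord0) ?size_enum_ord //; congr f.
  by apply: ord_inj; rewrite nth_enum_ord // inordK.
rewrite -{1}(cat_take_drop n l); congr (_ ++ _).
rewrite (drop_nth 0) ?hs // (drop_nth 0) ?hs // drop_oversize ?hs //.
by rewrite !hn.
Qed.

Lemma take_eq n (f g : 'I_n.+2 -> int) :
  (forall k : 'I_n.+2, (k < n)%N -> f k = g k) ->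
  take n [seq f k | k <- enum 'I_n.+2] = take n [seq g k | k <- enum 'I_n.+2].
Proof.
move=> h; apply: (@eq_from_nth _ 0); first by rewrite !size_take !size_map.
move=> m; rewrite size_take size_map size_enum_ord => hm.
have hm2 : (m < n)%N by move: hm; rewrite (leqnSn n.+1).
have hE : size (enum 'I_n.+2) = n.+2 by rewrite size_enum_ord.
have hv : (nth ord0 (enum 'I_n.+2) m : nat) = m by rewrite nth_enum_ord //; lia.
rewrite enumT in hE hv.
have hm3 : (m < n.+2)%N by lia.
rewrite !nth_take // !(nth_map ord0).
- by apply: h; rewrite hv.
all: first [by rewrite hE | by rewrite size_enum_ord | by have := size_enum_ord n.+2; rewrite enumT => -> ].
Qed.

Lemma map_cst (T : Type) (c : int) (s : seq T) : [seq c | _ <- s] = nseq (size s) c.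
Proof. by elim: s => //= x s ->. Qed.

Theorem lemma2p5 (r : nat) (hr : (0 < r)%N) (e : 'I_r -> int) :
  (forall s : 'S_r, Phi [seq e (s i) | i <- enum 'I_r] = ratX) ->
  (forall i j : 'I_r, e i = e j) /\
  (forall i : 'I_r, e i = -1 \/ e i = 0 \/ e i = 1).
Proof.
move=> H.
have P1 : forall i j : 'I_r, e i = e j.
  move=> i j; case: (eqVneq i j) => [-> //|hij].
  case: r hr e H i j hij => [//|[|n]] _ e H i j hij.
    by rewrite (ord1 i) (ord1 j) in hij; rewrite eqxx in hij.
  have hab : (inord n : 'I_n.+2) != inord n.+1.
    by apply/eqP => /(congr1 (@nat_of_ord _)); rewrite !inordK //; lia.
  have [s [hsa hsb]] := @exists_perm _ _ _ _ _ hab hij.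
  have H1 := H s; have H2 := H (tperm (inord n) (inord n.+1) * s)%g.
  rewrite split_map in H1; rewrite split_map in H2.
  rewrite !permM tpermL tpermR hsa hsb in H2.
  rewrite hsa hsb in H1.
  rewrite (@take_eq n (fun k => e ((tperm (inord n) (inord n.+1) * s)%g k))
     (fun k => e (s k))) in H2.
    exact: swap H1 H2.
  move=> k hk; rewrite permM tpermD //; apply/eqP => /(congr1 (@nat_of_ord _));
    rewrite inordK //; lia.
split => // i.
case: r hr e H P1 i => [//|n] _ e H P1 i.
apply: (@small (e i) n).
have := H 1%g.
have -> : [seq e ((1 : 'S_n.+1)%g k) | k <- enum 'I_n.+1] = nseq n.+1 (e i) => //.
rewrite (eq_map (g := fun _ => e i)); last by move=> k; rewrite perm1 (P1 k i).
by rewrite map_cst; congr nseq; first [by rewrite size_enum_ord | by rewrite -enumT size_enum_ord | by rewrite cardT card_ord].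
Qed.
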